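(* Let $d\ge1$ and $\delta=(1\,2\,\cdots\,d)\in\mathrm{Sym}_d$. For any left-right matching, the associated top and bottom permutations satisfy $\pi^T\cdot\pi^B=\delta$; for any top-bottom matching, the associated left and right permutations satisfy $\pi^L\cdot\pi^R=\delta$.
   Context: Place $4d$ points on the boundary circle of a closed disk, labeled in counterclockwise cyclic order $T_1,L_1,B_1,R_1,T_2,L_2,B_2,R_2,\dots,T_d,L_d,B_d,R_d$. A left-right matching is a partition of $\{L_1,R_1,\dots,L_d,R_d\}$ into $d$ pairs that can be joined by pairwise disjoint arcs in the disk (a noncrossing perfect matching). Removing these arcs splits the disk into regions; the top partition $[\lambda]^T$ of $[d]$ puts $i,j$ in the same block iff $T_i,T_j$ lie in the same region, and the bottom partition $[\lambda]^B$ is defined likewise from the $B_i$. A top-bottom matching is defined in the same way with the $T$'s and $B$'s (cyclic order $T_1,B_1,\dots,T_d,B_d$), and it determines left and right partitions $[\lambda]^L,[\lambda]^R$ from the $L_i$'s and $R_i$'s. For a set partition of $[d]$, its permutation turns each block into a cycle listing its elements in increasing order; $\pi^T,\pi^B,\pi^L,\pi^R$ are the permutations of $[\lambda]^T,[\lambda]^B,[\lambda]^L,[\lambda]^R$. Products compose right to left (in $\pi^T\cdot\pi^B$, $\pi^B$ is applied first). *)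

(* Defs.v *)
From mathcomp Require Import all_boot.
Set Implicit Arguments. Unset Strict Implicit. Unset Printing Implicit Defensive.

(* Boundary points are encoded as positions 0 .. 4d-1 on the circle in
   counterclockwise order; with 0-based i : 'I_d,
     T_{i+1} = 4i, L_{i+1} = 4i+1, B_{i+1} = 4i+2, R_{i+1} = 4i+3. *)

(* z lies strictly inside the boundary arc cut off by the chord {a,b}
   (the arc not containing position 0). *)
Definition inside (a b z : nat) : bool := (minn a b < z) && (z < maxn a b).

(* m is a noncrossing perfect matching of the point set S (only its values on
   S matter): an involution without fixed points on S whose chords pairwise
   do not cross. *)
Definition nc_matching (S : pred nat) (m : nat -> nat) : Prop :=
  (forall p, S p -> [/\ S (m p), m p != p & m (m p) = p]) /\
  (forall p q, S p -> S q -> inside p (m p) q = inside p (m p) (m q)).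

(* Two boundary points x, y (not endpoints of arcs) lie in the same region of
   the disk cut by the arcs iff no arc separates them. *)
Definition same_region (d : nat) (S : pred nat) (m : nat -> nat) (x y : nat) : bool :=
  [forall p : 'I_(4 * d), S p ==> (inside p (m p) x == inside p (m p) y)].

(* The permutation of a set partition (given by its equivalence relation r):
   each block becomes the cycle listing its elements in increasing order. *)
Definition block_perm (d : nat) (r : rel 'I_d) (i : 'I_d) : 'I_d :=
  next [seq j <- enum 'I_d | r i j] i.

Definition S_LR (d : nat) : pred nat := fun p => (p < 4 * d) && odd p.
Definition S_TB (d : nat) : pred nat := fun p => (p < 4 * d) && ~~ odd p.

Definition pi_T d m := block_perm (fun i j : 'I_d => same_region d (S_LR d) m (4 * i) (4 * j)).
Definition pi_B d m := block_perm (fun i j : 'I_d => same_region d (S_LR d) m (4 * i + 2) (4 * j + 2)).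
Definition pi_L d m := block_perm (fun i j : 'I_d => same_region d (S_TB d) m (4 * i + 1) (4 * j + 1)).
Definition pi_R d m := block_perm (fun i j : 'I_d => same_region d (S_TB d) m (4 * i + 3) (4 * j + 3)).

(* delta = (1 2 ... d) is ordS : i |-> (i+1) mod d on 'I_d (0-based). *)

(* Main.v *)
Require Import Defs.
From mathcomp Require Import all_boot zify.
Set Warnings "-notation-overridden".
Set Implicit Arguments. Unset Strict Implicit. Unset Printing Implicit Defensive.
Lemma even_involution (f : nat -> nat) n : forall (s : seq nat), size s <= n -> uniq s ->
  (forall z, z \in s -> [/\ f z \in s, f z != z & f (f z) = z]) -> ~~ odd (size s).
Proof.
elim: n => [|n IH] [|z s] //= hs /andP[zs us] H.
have [fzs fzz ffz] := H z (mem_head _ _).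
have fzs' : f z \in s by move: fzs; rewrite inE (negbTE fzz).
set s' := rem (f z) s.
have us' : uniq s' by rewrite rem_uniq.
have szs : size s = (size s').+1 by rewrite /s' size_rem //; move: fzs'; case: (s).
have : ~~ odd (size s').
  apply: IH => //; first by move: hs; rewrite szs ltnS => /ltnW.
  move=> w; rewrite /s' (mem_rem_uniq _ us) inE => /andP[wfz ws].
  have [fws fww ffw] : [/\ f w \in z :: s, f w != w & f (f w) = w] by apply: H; rewrite inE ws orbT.
  have wz : w != z by apply: contraNneq zs => <-.
  split => //.
  rewrite (mem_rem_uniq _ us) inE; apply/andP; split.
    by apply: contra wz => /eqP /(congr1 f); rewrite ffw ffz => ->.
  move: fws; rewrite inE => /orP[/eqP fwz|] //.
  by move: wfz; rewrite -ffw fwz eqxx.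
by rewrite szs /= negbK.
Qed.

Lemma count_parity c a n : count (fun z => odd z == c) (iota a n.*2) = n.
Proof.
elim: n a => [|n IH] a //=.
rewrite IH; case: (odd a); case: (c) => //=.
Qed.

Lemma chord_mod4 N b (S : pred nat) m p : (forall z, S z = (z < N) && (odd z == b)) ->
  nc_matching S m -> S p -> m p %% 4 = (p + 2) %% 4.
Proof.
move=> HS [Hinv Hnc] Sp; have [Smp mpp mmp] := Hinv p Sp.
set lo := minn p (m p); set hi := maxn p (m p).
set s := [seq z <- iota lo.+1 (hi - lo.+1) | S z].
have ev : ~~ odd (size s).
  apply: (@even_involution m (size s)) => //; first by rewrite filter_uniq // iota_uniq.
  move=> z; rewrite mem_filter mem_iota => /andP[Sz /andP[h1 h2]].
  have [Smz mzz mmz] := Hinv z Sz.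
  have insz : inside p (m p) z by rewrite /inside -/lo -/hi; apply/andP; split; lia.
  have := Hnc p z Sp Sz; rewrite insz => /esym; rewrite /inside -/lo -/hi => /andP[h3 h4].
  split => //; rewrite mem_filter Smz mem_iota; apply/andP; split; lia.
move: Sp Smp; rewrite !HS => /andP[pN /eqP op] /andP[mpN /eqP omp].
have e2 : p %% 2 = m p %% 2 by rewrite !modn2 op omp.
have hN : hi < N by rewrite /hi gtn_max pN mpN.
have mpp' : p <> m p by move=> e; move: mpp; rewrite -e eqxx.
set k := (hi - lo.+2) %/ 2.
have hk : hi - lo.+1 = (k.*2).+1 by rewrite -muln2 /k /hi /lo; lia.
have : size s = k.
  rewrite size_filter (eq_in_count (a2 := fun z => odd z == b)); last first.
    by move=> z; rewrite mem_iota HS => /andP[_ h]; rewrite (_ : z < N) //; lia.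
  rewrite hk /= count_parity.
  have -> : odd lo = b by have [->|->] : lo = p \/ lo = m p by rewrite /lo; lia.
  by case: (b).
move=> sk; rewrite sk in ev.
have k2 : k %% 2 = 0 by rewrite modn2; case: (odd k) ev.
rewrite /k /hi /lo in k2; lia.
Qed.

Lemma sorted_after d (a b : seq 'I_d) (x : 'I_d) :
  sorted (fun u v : 'I_d => u < v) (a ++ x :: b) -> forall y, y \in b -> x < y.
Proof.
rewrite sorted_cat_cons => /andP[_ pb] y yb.
have := order_path_min (fun u v w : 'I_d => @ltn_trans u v w) pb.
by move/allP => /(_ y yb).
Qed.

Lemma next_sorted d (s : seq 'I_d) (i k : 'I_d) :
  sorted (fun a b : 'I_d => a < b) s -> i \in s -> k \in s ->
  (i < k /\ (forall j : 'I_d, j \in s -> i < j -> k <= j)) \/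
  (k <= i /\ (forall j : 'I_d, j \in s -> i < j -> False) /\ (forall j : 'I_d, j \in s -> k <= j)) ->
  next s i = k.
Proof.
move=> ss iS ks H.
have us : uniq s := sorted_uniq (fun u v w : 'I_d => @ltn_trans u v w) (fun u : 'I_d => ltnn u) ss.
move: ss us ks H; case/splitPr: iS => s1 s2 ss us ks H.
have -> : next (s1 ++ i :: s2) i = head i (s2 ++ s1).
  by rewrite -(next_rot (size s1) us) rot_size_cat /=; case: (s2 ++ s1) => [|h t] /=; rewrite eqxx.
case: H => [[ik Hk] | [ki [Hn Hk]]].
- have ks2 : k \in s2.
    move: ks; rewrite mem_cat inE => /or3P[ks1|/eqP e|] //.
      case/splitPr: ks1 ss => a b; rewrite -catA cat_cons => ss.
      have := sorted_after ss (y := i); rewrite mem_cat inE eqxx orbT => /(_ isT).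
      by rewrite ltnNge (ltnW ik).
    by rewrite e ltnn in ik.
  case: s2 ss us ks ks2 Hk => [|h t] // ss us ks ks2 Hk /=.
  apply/val_inj/eqP; rewrite eqn_leq; apply/andP; split.
    move: ks2; rewrite inE => /orP[/eqP -> //|kt].
    have ss' : sorted (fun u v : 'I_d => u < v) ((rcons s1 i) ++ h :: t) by rewrite cat_rcons.
    exact: ltnW (sorted_after ss' kt).
  apply: Hk; first by rewrite mem_cat !inE eqxx !orbT.
  by apply: (sorted_after ss); rewrite inE eqxx.
- case: s2 ss us ks Hn Hk => [|h t] ss us ks Hn Hk; last first.
    by case: (Hn h); [rewrite mem_cat !inE eqxx !orbT | apply: (sorted_after ss); rewrite inE eqxx].
  rewrite /= in ss ks *; case: s1 ss us ks Hn Hk => [|h t] ss us ks Hn Hk /=.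
    by move: ks; rewrite inE => /eqP.
  apply/val_inj/eqP; rewrite eqn_leq; apply/andP; split; last by apply: Hk; rewrite mem_head.
  move: ks; rewrite inE => /orP[/eqP -> //|kt].
  have ss' : sorted (fun u v : 'I_d => u < v) ([::] ++ h :: (t ++ [:: i])) by [].
  exact: ltnW (sorted_after ss' kt).
Qed.

Lemma block_perm_next d (r : rel 'I_d) (i k : 'I_d) : r i i -> r i k ->
  (i < k /\ (forall j, r i j -> i < j -> k <= j)) \/
  (k <= i /\ (forall j, r i j -> i < j -> False) /\ (forall j, r i j -> k <= j)) ->
  block_perm r i = k.
Proof.
move=> rii rik H; rewrite /block_perm; apply: next_sorted.
- apply: sorted_filter; first by move=> u v w; apply: ltn_trans.
  by have := iota_ltn_sorted 0 d; rewrite -val_enum_ord sorted_map.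
- by rewrite mem_filter mem_enum rii.
- by rewrite mem_filter mem_enum rik.
case: H => [[h1 h2]|[h1 [h2 h3]]]; [left|right]; split => //.
- by move=> j; rewrite mem_filter => /andP[? _]; apply: h2.
- by split => j; rewrite mem_filter => /andP[? _]; [apply: h2| apply: h3].
Qed.
Lemma arith_sep (u v r q N : nat) :
  u %% 2 = r %% 2 -> v %% 2 = r %% 2 -> q %% 2 = r %% 2 -> r < q -> u != v ->
  ((u = r /\ v = q) \/ (u = q /\ v = r) \/
   (u <> r /\ u <> q /\ v <> r /\ v <> q /\ inside u v r = inside u v q)) ->
  [/\ inside u v (r.+1) = inside u v (q.-1),
  (0 < r -> inside u v (r.-1) = inside u v (q.+1)) &
  (r = 0 -> N %% 2 = 0 -> u < N -> v < N -> q < N -> inside u v q.+1 = inside u v N.-1)].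
Proof.
rewrite /inside => hu hv hq hrq huv H.
split; [|move=> hr|move=> r0 hN uN vN qN]; apply/idP/idP; lia.
Qed.

Lemma odd43 i : odd (4 * i + 3). Proof. by rewrite oddD oddM. Qed.
Lemma test i : (4 * i + 3) %% 4 = 3. Proof. lia. Qed.

Lemma same_regionP d (S : pred nat) m x y : (forall p, S p -> p < 4 * d) ->
  reflect (forall p, S p -> inside p (m p) x = inside p (m p) y) (same_region d S m x y).
Proof.
move=> Sb; apply: (iffP forallP) => H p.
  by move=> Sp; have := H (Ordinal (Sb p Sp)); rewrite /= Sp => /eqP.
by apply/implyP => Sp; apply/eqP; apply: H.
Qed.

Lemma same_region_refl d (S : pred nat) m x : same_region d S m x x.
Proof. by apply/forallP => p; rewrite eqxx implybT. Qed.

Lemma adj N b (S : pred nat) m r : (forall z, S z = (z < N) && (odd z == b)) ->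
  nc_matching S m -> S r -> r < m r ->
  [/\ forall p, S p -> inside p (m p) r.+1 = inside p (m p) (m r).-1,
      0 < r -> forall p, S p -> inside p (m p) r.-1 = inside p (m p) (m r).+1 &
      r = 0 -> N %% 2 = 0 -> forall p, S p -> inside p (m p) (m r).+1 = inside p (m p) N.-1].
Proof.
move=> HS nc Sr rq.
have key : forall p, S p -> [/\ inside p (m p) (r.+1) = inside p (m p) ((m r).-1),
  (0 < r -> inside p (m p) (r.-1) = inside p (m p) ((m r).+1)) &
  (r = 0 -> N %% 2 = 0 -> p < N -> m p < N -> m r < N -> inside p (m p) (m r).+1 = inside p (m p) N.-1)].
  move=> p Sp.
  have [Smp mpp mmp] := nc.1 p Sp; have [Smr mrr mmr] := nc.1 r Sr.
  have par : forall z, S z -> z %% 2 = r %% 2.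
    by move=> z; rewrite HS => /andP[_ /eqP oz]; move: Sr; rewrite HS => /andP[_ /eqP orr]; rewrite !modn2 oz orr.
  apply: arith_sep; rewrite ?par // 1?eq_sym //.
  case: (eqVneq p r) => [pr|pr]; first by left; rewrite pr.
  case: (eqVneq p (m r)) => [pq|pq]; first by right; left; rewrite pq mmr.
  right; right; split; first exact/eqP.
  split; first exact/eqP.
  split; first by move=> e; move: pq; rewrite -e mmp eqxx.
  split; first by move=> e; move: pr; rewrite -(mmr) -e mmp eqxx.
  by rewrite (nc.2 p r Sp Sr).
have ltN : forall z, S z -> z < N by move=> z; rewrite HS => /andP[].
split.
- by move=> p Sp; case: (key p Sp).
- by move=> r0 p Sp; case: (key p Sp) => _ ->.
- move=> r0 N0 p Sp; case: (key p Sp) => _ _ -> //; apply: ltN => //.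
  + by case: (nc.1 p Sp).
  + by case: (nc.1 r Sr).
Qed.

Lemma LR_part d m : 0 < d -> nc_matching (S_LR d) m -> forall i : 'I_d, pi_T m (pi_B m i) = ordS i.
Proof.
move=> hd nc i.
have HS : forall z, S_LR d z = (z < 4 * d) && (odd z == true) by move=> z; rewrite eqb_id.
have Sb : forall p, S_LR d p -> p < 4 * d by move=> p /andP[].
have Sb' : forall p, S_LR d p -> m p < 4 * d by move=> p Sp; case: (nc.1 p Sp) => /andP[].
have hi := ltn_ord i.
have Sr : S_LR d (4 * i + 3) by rewrite /S_LR odd43 andbT; lia.
have [Smr mrr mmr] := nc.1 _ Sr.
have q4 := chord_mod4 HS nc Sr.
have [q eq] : {q | m (4 * i + 3) = q} by exists (m (4 * i + 3)).
rewrite eq in q4 Smr mrr mmr.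
have qN : q < 4 * d by move: Smr => /andP[].
have kd : q %/ 4 < d by lia.
pose kk : 'I_d := Ordinal kd.
have vk : (kk : nat) = q %/ 4 by [].
have sepr : forall x y, same_region d (S_LR d) m x y -> inside (4 * i + 3) q x = inside (4 * i + 3) q y.
  by move=> x y /(same_regionP _ _ _ Sb) H; rewrite -eq; apply: H.
case: (ltngtP (4 * i + 3) q) => [rq|qr|e]; last by move: mrr; rewrite e eqxx.
- have rq' : 4 * i + 3 < m (4 * i + 3) by rewrite eq.
  have [A1 A2 _] := adj HS nc Sr rq'.
  rewrite eq in A1 A2.
  have vo : (ordS i : nat) = i.+1 by rewrite /= modn_small //; lia.
  have -> : pi_B m i = kk.
    apply: block_perm_next; first exact: same_region_refl.
      apply/(same_regionP _ _ _ Sb) => p Sp.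
      rewrite (_ : 4 * i + 2 = (4 * i + 3).-1); last lia.
      rewrite (_ : 4 * kk + 2 = q.+1); last lia.
      by apply: A2 => //; lia.
    left; split; first lia.
    move=> j /sepr; rewrite /inside => h ij; have := ltn_ord j; lia.
  apply: block_perm_next; first exact: same_region_refl.
    apply/(same_regionP _ _ _ Sb) => p Sp; rewrite vo.
    rewrite (_ : 4 * kk = q.-1); last lia.
    rewrite (_ : 4 * i.+1 = (4 * i + 3).+1); last lia.
    by rewrite A1.
  right; split; first (rewrite vo; lia).
  split.
    move=> j /sepr; rewrite /inside => h kj; have := ltn_ord j; lia.
  move=> j /sepr; rewrite /inside vo => h; have := ltn_ord j; lia.
- have mq : m q = 4 * i + 3 by [].
  have qr' : q < m q by rewrite mq.
  have [B1 B2 _] := adj HS nc Smr qr'.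
  rewrite mq in B1 B2.
  have -> : pi_B m i = kk.
    apply: block_perm_next; first exact: same_region_refl.
      apply/(same_regionP _ _ _ Sb) => p Sp.
      rewrite (_ : 4 * i + 2 = (4 * i + 3).-1); last lia.
      rewrite (_ : 4 * kk + 2 = q.+1); last lia.
      by rewrite B1.
    right; split; first lia.
    split.
      move=> j /sepr; rewrite /inside => h ij; have := ltn_ord j; lia.
    move=> j /sepr; rewrite /inside => h; have := ltn_ord j; lia.
  have q0 : 0 < q by lia.
  case: (ltnP i.+1 d) => id.
  + have vo : (ordS i : nat) = i.+1 by rewrite /= modn_small.
    apply: block_perm_next; first exact: same_region_refl.
      apply/(same_regionP _ _ _ Sb) => p Sp; rewrite vo.
      rewrite (_ : 4 * kk = q.-1); last lia.
      rewrite (_ : 4 * i.+1 = (4 * i + 3).+1); last lia.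
      exact: B2.
    left; split; first (rewrite vo; lia).
    move=> j /sepr; rewrite /inside vo => h kj; have := ltn_ord j; lia.
  + have vo : (ordS i : nat) = 0 by rewrite /= (_ : i.+1 = d) ?modnn; lia.
    apply: block_perm_next; first exact: same_region_refl.
      apply/(same_regionP _ _ _ Sb) => p Sp; rewrite vo.
      have := B2 q0 p Sp; have := Sb p Sp; have := Sb' p Sp.
      rewrite (_ : 4 * kk = q.-1); last lia.
      rewrite /inside => h1 h2 h3; apply/idP/idP; lia.
    right; split; first (rewrite vo; lia).
    split; last by move=> j _; rewrite vo.
    move=> j /sepr; rewrite /inside => h kj; have := ltn_ord j; lia.
Qed.

Lemma even44 i : ~~ odd (4 * i + 4). Proof. by rewrite oddD oddM. Qed.

Lemma TB_part d m : 0 < d -> nc_matching (S_TB d) m -> forall i : 'I_d, pi_L m (pi_R m i) = ordS i.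
Proof.
move=> hd nc i.
have HS : forall z, S_TB d z = (z < 4 * d) && (odd z == false) by move=> z; rewrite /S_TB; case: (odd z).
have Sb : forall p, S_TB d p -> p < 4 * d by move=> p /andP[].
have Sb' : forall p, S_TB d p -> m p < 4 * d by move=> p Sp; case: (nc.1 p Sp) => /andP[].
have hi := ltn_ord i.
case: (ltnP i.+1 d) => id.
- have vo : (ordS i : nat) = i.+1 by rewrite /= modn_small.
  have Sr : S_TB d (4 * i + 4) by rewrite /S_TB even44 andbT; lia.
  have [Smr mrr mmr] := nc.1 _ Sr.
  have q4 := chord_mod4 HS nc Sr.
  have [q eq] : {q | m (4 * i + 4) = q} by exists (m (4 * i + 4)).
  rewrite eq in q4 Smr mrr mmr.
  have qN : q < 4 * d by move: Smr => /andP[].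
  have kd : q %/ 4 < d by lia.
  pose kk : 'I_d := Ordinal kd.
  have vk : (kk : nat) = q %/ 4 by [].
  have sepr : forall x y, same_region d (S_TB d) m x y -> inside (4 * i + 4) q x = inside (4 * i + 4) q y.
    by move=> x y /(same_regionP _ _ _ Sb) H; rewrite -eq; apply: H.
  case: (ltngtP (4 * i + 4) q) => [rq|qr|e]; last by move: mrr; rewrite e eqxx.
  + have rq' : 4 * i + 4 < m (4 * i + 4) by rewrite eq.
    have [A1 A2 _] := adj HS nc Sr rq'.
    rewrite eq in A1 A2.
    have -> : pi_R m i = kk.
      apply: block_perm_next; first exact: same_region_refl.
        apply/(same_regionP _ _ _ Sb) => p Sp.
        rewrite (_ : 4 * i + 3 = (4 * i + 4).-1); last lia.
        rewrite (_ : 4 * kk + 3 = q.+1); last lia.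
        by apply: A2 => //; lia.
      left; split; first lia.
      move=> j /sepr; rewrite /inside => h ij; have := ltn_ord j; lia.
    apply: block_perm_next; first exact: same_region_refl.
      apply/(same_regionP _ _ _ Sb) => p Sp; rewrite vo.
      rewrite (_ : 4 * kk + 1 = q.-1); last lia.
      rewrite (_ : 4 * i.+1 + 1 = (4 * i + 4).+1); last lia.
      by rewrite A1.
    right; split; first (rewrite vo; lia).
    split.
      move=> j /sepr; rewrite /inside => h kj; have := ltn_ord j; lia.
    move=> j /sepr; rewrite /inside vo => h; have := ltn_ord j; lia.
  + have mq : m q = 4 * i + 4 by [].
    have qr' : q < m q by rewrite mq.
    have [B1 B2 _] := adj HS nc Smr qr'.
    rewrite mq in B1 B2.
    have -> : pi_R m i = kk.
      apply: block_perm_next; first exact: same_region_refl.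
        apply/(same_regionP _ _ _ Sb) => p Sp.
        rewrite (_ : 4 * i + 3 = (4 * i + 4).-1); last lia.
        rewrite (_ : 4 * kk + 3 = q.+1); last lia.
        by rewrite B1.
      right; split; first lia.
      split.
        move=> j /sepr; rewrite /inside => h ij; have := ltn_ord j; lia.
      move=> j /sepr; rewrite /inside => h; have := ltn_ord j; lia.
    have q0 : 0 < q by lia.
    apply: block_perm_next; first exact: same_region_refl.
      apply/(same_regionP _ _ _ Sb) => p Sp; rewrite vo.
      rewrite (_ : 4 * kk + 1 = q.-1); last lia.
      rewrite (_ : 4 * i.+1 + 1 = (4 * i + 4).+1); last lia.
      exact: B2.
    left; split; first (rewrite vo; lia).
    move=> j /sepr; rewrite /inside vo => h kj; have := ltn_ord j; lia.
- have vo : (ordS i : nat) = 0 by rewrite /= (_ : i.+1 = d) ?modnn; lia.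
  have Sr : S_TB d 0 by rewrite /S_TB /=; lia.
  have [Smr mrr mmr] := nc.1 _ Sr.
  have q4 := chord_mod4 HS nc Sr.
  have [q eq] : {q | m 0 = q} by exists (m 0).
  rewrite eq in q4 Smr mrr mmr.
  have qN : q < 4 * d by move: Smr => /andP[].
  have kd : q %/ 4 < d by lia.
  pose kk : 'I_d := Ordinal kd.
  have vk : (kk : nat) = q %/ 4 by [].
  have sepr : forall x y, same_region d (S_TB d) m x y -> inside 0 q x = inside 0 q y.
    by move=> x y /(same_regionP _ _ _ Sb) H; rewrite -eq; apply: H.
  have rq' : 0 < m 0 by rewrite eq; lia.
  have [A1 _ A3] := adj HS nc Sr rq'.
  rewrite eq in A1 A3.
  have -> : pi_R m i = kk.
    apply: block_perm_next; first exact: same_region_refl.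
      apply/(same_regionP _ _ _ Sb) => p Sp.
      rewrite (_ : 4 * i + 3 = (4 * d).-1); last lia.
      rewrite (_ : 4 * kk + 3 = q.+1); last lia.
      by rewrite A3 //; lia.
    right; split; first lia.
    split.
      move=> j _ ij; have := ltn_ord j; lia.
    move=> j /sepr; rewrite /inside => h; have := ltn_ord j; lia.
  apply: block_perm_next; first exact: same_region_refl.
    apply/(same_regionP _ _ _ Sb) => p Sp; rewrite vo.
    rewrite (_ : 4 * kk + 1 = q.-1); last lia.
    by rewrite A1.
  right; split; first (rewrite vo; lia).
  split; last by move=> j _; rewrite vo.
  move=> j /sepr; rewrite /inside => h kj; have := ltn_ord j; lia.
Qed.

Theorem proposition4p22 (d : nat) (hd : 0 < d) :
  (forall m : nat -> nat, nc_matching (S_LR d) m ->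
     forall i : 'I_d, pi_T m (pi_B m i) = ordS i) /\
  (forall m : nat -> nat, nc_matching (S_TB d) m ->
     forall i : 'I_d, pi_L m (pi_R m i) = ordS i).
Proof.
by split => m nc i; [apply: LR_part | apply: TB_part].
Qed.
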